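(* Let $f$ be as in the standing setting and satisfy quadratic functional growth with constant $\kappa_f>0$: $f(x)-f^*\ge\frac{\kappa_f}{2}\|x-[x]_{X^*}\|^2$ for all $x\in X$. Let $\beta\ge0$, $L>0$, $\bar L_f>0$, and let $\{x^k\}\subseteq X$ be generated by a feasible descent method: for $k\ge0$, $$x^{k+1}=\big[x^k-\alpha_k\nabla f(x^k)+e^k\big]_X$$ with step sizes $\alpha_k\ge\bar L_f^{-1}$ and perturbations $e^k$ satisfying $\|e^k\|\le\beta\|x^{k+1}-x^k\|$ and $f(x^{k+1})\le f(x^k)-\frac{L}{2}\|x^{k+1}-x^k\|^2$. Then $$f(x^k)-f^*\le\left(\frac{1}{1+\frac{L\kappa_f}{4(L_f+\bar L_f+\beta\bar L_f)^2}}\right)^k\big(f(x^0)-f^*\big)\qquad\forall k\ge0.$$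
   Context: Standing setting: $X\subseteq\mathbb{R}^n$ is a nonempty closed convex set; $f:X\to\mathbb{R}$ is convex and continuously differentiable, with $L_f$-Lipschitz continuous gradient on $X$ ($L_f>0$). Consider $f^*=\min_{x\in X}f(x)$ with optimal set $X^*$ nonempty and closed and $f^*$ finite. $\|\cdot\|$ is the Euclidean norm and $[u]_S$ is the Euclidean projection onto a closed convex set $S$. *)

(* Defs.v *)
From Stdlib Require Import Reals.
From mathcomp Require Import ssreflect ssrfun ssrbool eqtype ssrnat fintype bigop.
Set Implicit Arguments. Unset Strict Implicit.

Open Scope R_scope.

Definition vec (n : nat) := 'I_n -> R.

Definition vadd {n} (x y : vec n) : vec n := fun i => x i + y i.
Definition vsub {n} (x y : vec n) : vec n := fun i => x i - y i.
Definition vscale {n} (a : R) (x : vec n) : vec n := fun i => a * x i.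

Definition dot {n} (x y : vec n) : R := \big[Rplus/0]_(i < n) (x i * y i).
Definition norm {n} (x : vec n) : R := sqrt (dot x x).

Definition rn_open {n} (U : vec n -> Prop) : Prop :=
  forall x, U x -> exists r, 0 < r /\ forall y, norm (vsub y x) < r -> U y.

Definition rn_converges {n} (u : nat -> vec n) (p : vec n) : Prop :=
  forall eps, 0 < eps -> exists N, forall k, (N <= k)%nat -> norm (vsub (u k) p) < eps.

Definition rn_closed {n} (S : vec n -> Prop) : Prop :=
  forall (u : nat -> vec n) p, (forall k, S (u k)) -> rn_converges u p -> S p.

Definition rn_convex {n} (S : vec n -> Prop) : Prop :=
  forall x y t, S x -> S y -> 0 <= t <= 1 ->
    S (vadd (vscale t x) (vscale (1 - t) y)).

Definition rn_nonempty {n} (S : vec n -> Prop) : Prop := exists x, S x.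

Definition is_proj {n} (S : vec n -> Prop) (u p : vec n) : Prop :=
  S p /\ forall q, S q -> norm (vsub u p) <= norm (vsub u q).

Definition rn_convex_on {n} (S : vec n -> Prop) (f : vec n -> R) : Prop :=
  forall x y t, S x -> S y -> 0 <= t <= 1 ->
    f (vadd (vscale t x) (vscale (1 - t) y)) <= t * f x + (1 - t) * f y.

Definition has_gradient_on {n} (U : vec n -> Prop) (f : vec n -> R) (g : vec n -> vec n) : Prop :=
  forall x, U x -> forall eps, 0 < eps -> exists delta, 0 < delta /\
    forall y, norm (vsub y x) < delta ->
      Rabs (f y - f x - dot (g x) (vsub y x)) <= eps * norm (vsub y x).

Definition rn_continuous_on {n} (U : vec n -> Prop) (g : vec n -> vec n) : Prop :=
  forall x, U x -> forall eps, 0 < eps -> exists delta, 0 < delta /\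
    forall y, U y -> norm (vsub y x) < delta -> norm (vsub (g y) (g x)) < eps.

Definition C1_on {n} (X : vec n -> Prop) (f : vec n -> R) (g : vec n -> vec n) : Prop :=
  exists U : vec n -> Prop, rn_open U /\ (forall x, X x -> U x) /\
    has_gradient_on U f g /\ rn_continuous_on U g.

Definition rn_lipschitz_on {n} (X : vec n -> Prop) (g : vec n -> vec n) (L : R) : Prop :=
  forall x y, X x -> X y -> norm (vsub (g x) (g y)) <= L * norm (vsub x y).

Definition is_min_value {n} (X : vec n -> Prop) (f : vec n -> R) (fstar : R) : Prop :=
  (forall x, X x -> fstar <= f x) /\ (exists x, X x /\ f x = fstar).

Definition opt_set {n} (X : vec n -> Prop) (f : vec n -> R) (fstar : R) : vec n -> Prop :=
  fun x => X x /\ f x = fstar.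

(* Main.v *)
Require Import Defs.
From HB Require Import structures.
From Stdlib Require Import Reals Lra Psatz Classical ClassicalEpsilon.
From mathcomp Require Import ssreflect ssrfun ssrbool eqtype ssrnat fintype bigop.
Open Scope R_scope.

HB.instance Definition _ := Monoid.isComLaw.Build R 0 Rplus
  (fun a b c => esym (Rplus_assoc a b c)) Rplus_comm Rplus_0_l.

Section Sums.
Context {n : nat}.
Notation S F := (\big[Rplus/0]_(i<n) F i).

Lemma sumD (F G : 'I_n -> R) : S (fun i => F i + G i) = S F + S G.
Proof. by rewrite big_split. Qed.

Lemma sumZ (c : R) (F : 'I_n -> R) : S (fun i => c * F i) = c * S F.
Proof.
apply: (big_ind2 (fun a b => a = c * b)).
- by rewrite Rmult_0_r.
- move=> a b a' b' -> ->; ring.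
- by [].
Qed.

Lemma sumB (F G : 'I_n -> R) : S (fun i => F i - G i) = S F - S G.
Proof.
have -> : S (fun i => F i - G i) = S (fun i => F i + (-1) * G i).
  by apply: eq_bigr => i _; ring.
rewrite sumD sumZ; ring.
Qed.

Lemma sum_le (F G : 'I_n -> R) : (forall i, F i <= G i) -> S F <= S G.
Proof.
move=> H; apply: (big_ind2 (fun a b => a <= b)).
- lra.
- move=> a b a' b' h1 h2; lra.
- by move=> i _; apply H.
Qed.

Lemma sum_ge0 (F : 'I_n -> R) : (forall i, 0 <= F i) -> 0 <= S F.
Proof.
move=> H; apply: (big_ind (fun a => 0 <= a)).
- lra.
- move=> a b h1 h2; lra.
- by move=> i _; apply H.
Qed.

Lemma sum_ge_term (F : 'I_n -> R) j : (forall i, 0 <= F i) -> F j <= S F.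
Proof.
move=> H; rewrite (bigD1 j) //=.
have : 0 <= \big[Rplus/0]_(i < n | i != j) F i.
  apply: (big_ind (fun a => 0 <= a)); [lra| move=> a b ??; lra| by move=> i _; apply H].
move=> h; have := Rplus_le_compat_l (F j) _ _ h; rewrite Rplus_0_r; exact.
Qed.

Lemma sum_const (c : R) : S (fun _ => c) = INR n * c.
Proof.
rewrite big_const_ord. elim: n => [|m IH]; first (simpl; ring).
rewrite iterS IH S_INR; ring.
Qed.

End Sums.

Section Vec.
Context {n : nat}.
Implicit Types x y z u v : vec n.

Lemma dot_ext x x' y y' : (forall i, x i = x' i) -> (forall i, y i = y' i) -> dot x y = dot x' y'.
Proof. move=> h1 h2; rewrite /dot; apply: eq_bigr => i _; by rewrite h1 h2. Qed.

Lemma dot_comm x y : dot x y = dot y x.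
Proof. rewrite /dot; apply: eq_bigr => i _; ring. Qed.

Lemma dot_addl x y z : dot (vadd x y) z = dot x z + dot y z.
Proof. rewrite /dot -sumD; apply: eq_bigr => i _; rewrite /vadd; ring. Qed.

Lemma dot_subl x y z : dot (vsub x y) z = dot x z - dot y z.
Proof. rewrite /dot -sumB; apply: eq_bigr => i _; rewrite /vsub; ring. Qed.

Lemma dot_scalel a x z : dot (vscale a x) z = a * dot x z.
Proof. rewrite /dot -sumZ; apply: eq_bigr => i _; rewrite /vscale; ring. Qed.

Lemma dot_ge0 x : 0 <= dot x x.
Proof. apply: sum_ge0 => i; nra. Qed.

Lemma norm_ge0 x : 0 <= norm x.
Proof. apply: sqrt_pos. Qed.

Lemma norm_sq x : norm x ^ 2 = dot x x.
Proof. rewrite /norm pow2_sqrt //; apply: dot_ge0. Qed.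

Lemma coord_sq x i : x i ^ 2 <= dot x x.
Proof.
have -> : x i ^ 2 = x i * x i by ring.
rewrite /dot; apply: (@sum_ge_term n (fun i => x i * x i) i) => j; nra.
Qed.

Lemma quad x y t : dot (vsub x (vscale t y)) (vsub x (vscale t y)) =
  dot x x - 2 * t * dot x y + t ^ 2 * dot y y.
Proof.
rewrite /dot -!sumZ -sumB -sumD; apply: eq_bigr => i _; rewrite /vsub /vscale; ring.
Qed.

Lemma cs_sq x y : dot x y ^ 2 <= dot x x * dot y y.
Proof.
set a := dot x x; set b := dot x y; set c := dot y y.
have H : forall t, 0 <= a - 2 * t * b + t ^ 2 * c.
  move=> t; rewrite /a /b /c -quad; apply: dot_ge0.
have hc : 0 <= c by apply: dot_ge0.
have ha : 0 <= a by apply: dot_ge0.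
case: (Rle_lt_or_eq_dec 0 c hc) => hc'.
- have := H (b / c).
  have -> : a - 2 * (b / c) * b + (b / c) ^ 2 * c = a - b ^ 2 / c by field; lra.
  move=> h.
  have : b ^ 2 / c <= a by lra.
  move=> h2. have := Rmult_le_compat_r c _ _ hc h2.
  have -> : b ^ 2 / c * c = b ^ 2 by field; lra.
  lra.
- rewrite -hc'.
  case: (Req_dec b 0) => hb.
  + rewrite hb; nra.
  + have := H ((a + 1) / (2 * b)); rewrite -hc'.
    have -> : a - 2 * ((a + 1) / (2 * b)) * b + ((a + 1) / (2 * b)) ^ 2 * 0 = -1
      by field; lra.
    lra.
Qed.

Lemma cs x y : dot x y <= norm x * norm y.
Proof.
apply: Rle_trans (Rle_abs _) _.
rewrite -sqrt_Rsqr_abs /norm -sqrt_mult_alt; last by apply: dot_ge0.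
apply: sqrt_le_1_alt; rewrite Rsqr_pow2; apply: cs_sq.
Qed.

Lemma norm_le_of x c : 0 <= c -> dot x x <= c ^ 2 -> norm x <= c.
Proof. move=> hc h; rewrite /norm -(sqrt_pow2 c hc); exact: sqrt_le_1_alt. Qed.

Lemma norm_lt_of x c : 0 < c -> dot x x < c ^ 2 -> norm x < c.
Proof.
move=> hc h; rewrite /norm -(sqrt_pow2 c); last lra.
apply: sqrt_lt_1_alt; split => //; apply: dot_ge0.
Qed.

Lemma norm_triangle u a b : (forall i, u i = a i + b i) -> norm u <= norm a + norm b.
Proof.
move=> h; apply: norm_le_of.
  have := norm_ge0 a; have := norm_ge0 b; lra.
rewrite (@dot_ext u (vsub a (vscale (-1) b)) u (vsub a (vscale (-1) b))).
- rewrite quad -!norm_sq. have := cs a b. have := norm_ge0 a; have := norm_ge0 b. nra.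
- by move=> i; rewrite h /vsub /vscale; ring.
- by move=> i; rewrite h /vsub /vscale; ring.
Qed.

Lemma norm_ext x y : (forall i, x i = y i) -> norm x = norm y.
Proof. move=> h; by rewrite /norm (@dot_ext x y x y h h). Qed.

Lemma norm_subC x y : norm (vsub x y) = norm (vsub y x).
Proof. rewrite /norm; congr sqrt; rewrite /dot; apply: eq_bigr => i _; rewrite /vsub; ring. Qed.

End Vec.

Lemma abs_bounds {a b : R} : Rabs a <= b -> - b <= a /\ a <= b.
Proof.
move=> h; have := Rle_abs a; have := Rle_abs (- a); rewrite Rabs_Ropp; lra.
Qed.

Lemma norm_scale {n} (t : R) (x : vec n) : 0 <= t -> norm (vscale t x) = t * norm x.
Proof.
move=> ht; rewrite /norm dot_scalel dot_comm dot_scalel -Rmult_assoc.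
rewrite sqrt_mult_alt; last nra.
have -> : t * t = t ^ 2 by ring.
by rewrite sqrt_pow2.
Qed.

Lemma norm_le_sq {n} {a b : vec n} : norm a <= norm b -> dot a a <= dot b b.
Proof.
move=> h; rewrite -!norm_sq. have := norm_ge0 a. nra.
Qed.

Lemma proj_vi {n} (X : vec n -> Prop) z y w :
  rn_convex X -> is_proj X z y -> X w -> dot (vsub z y) (vsub w y) <= 0.
Proof.
move=> hc [hy hmin] hw.
set B := dot (vsub z y) (vsub w y); set C := dot (vsub w y) (vsub w y).
have key : forall t, 0 < t <= 1 -> 2 * B <= t * C.
  move=> t ht.
  have hX := hc w y t hw hy (conj (Rlt_le _ _ (proj1 ht)) (proj2 ht)).
  have := norm_le_sq (hmin _ hX).
  rewrite (@dot_ext _ (vsub z (vadd (vscale t w) (vscale (1 - t) y)))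
     (vsub (vsub z y) (vscale t (vsub w y))) (vsub z (vadd (vscale t w) (vscale (1 - t) y)))
     (vsub (vsub z y) (vscale t (vsub w y)))); last first.
    by move=> i; rewrite /vsub /vadd /vscale; ring.
    by move=> i; rewrite /vsub /vadd /vscale; ring.
  rewrite quad -/B -/C => h.
  have : t * (2 * B) <= t * (t * C) by nra.
  move=> h2; apply: (Rmult_le_reg_l t) => //; lra.
have hC : 0 <= C by apply: dot_ge0.
apply: Rnot_lt_le => hB.
have := key (B / (B + C)).
have h1 : 0 < B / (B + C) by apply: Rdiv_lt_0_compat; lra.
have h2 : B / (B + C) <= 1.
  apply: (Rmult_le_reg_r (B + C)); first lra.
  rewrite /Rdiv Rmult_assoc Rinv_l; lra.
move=> /(_ (conj h1 h2)).
have -> : B / (B + C) * C = B * (C / (B + C)) by field; lra.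
have : C / (B + C) <= 1.
  apply: (Rmult_le_reg_r (B + C)); first lra.
  rewrite /Rdiv Rmult_assoc Rinv_l; lra.
move=> h3 h4. have : B * (C / (B + C)) <= B * 1 by apply: Rmult_le_compat_l; lra.
lra.
Qed.

Lemma first_order {n} (U X : vec n -> Prop) f g y w :
  rn_convex_on X f -> has_gradient_on U f g -> U y -> X y -> X w ->
  dot (g y) (vsub w y) <= f w - f y.
Proof.
move=> hcf hg hU hy hw.
set d := vsub w y; set N := norm d.
have hN : 0 <= N by apply: norm_ge0.
apply: Rnot_lt_le => hlt.
set D := dot (g y) d - (f w - f y).
have hD : 0 < D by rewrite /D; lra.
have heps : 0 < D / (2 * (N + 1)) by apply: Rdiv_lt_0_compat; lra.
have [del [hdel H]] := hg y hU _ heps.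
set t := Rmin 1 (del / (2 * (N + 1))).
have ht0 : 0 < t.
  rewrite /t; apply: Rmin_glb_lt; first lra.
  apply: Rdiv_lt_0_compat; lra.
have ht1 : t <= 1 by apply: Rmin_l.
have ht2 : t <= del / (2 * (N + 1)) by apply: Rmin_r.
set yt := vadd (vscale t w) (vscale (1 - t) y).
have hnorm : norm (vsub yt y) = t * N.
  rewrite -norm_scale; last lra.
  apply: norm_ext => i; rewrite /yt /d /vsub /vadd /vscale; ring.
have htN : t * N < del.
  have : t * N <= del / (2 * (N + 1)) * N by apply: Rmult_le_compat_r.
  have : del / (2 * (N + 1)) * N < del.
    have -> : del / (2 * (N + 1)) * N = del * (N / (2 * (N + 1))) by field; lra.
    have : N / (2 * (N + 1)) < 1.
      apply: (Rmult_lt_reg_r (2 * (N + 1))); first lra.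
      rewrite /Rdiv Rmult_assoc Rinv_l; lra.
    move=> h; have := Rmult_lt_compat_l del _ _ hdel h. lra.
  lra.
have := H yt (ltac:(rewrite hnorm; exact htN)).
have -> : dot (g y) (vsub yt y) = t * dot (g y) d.
  rewrite (dot_comm (g y) d) -dot_scalel dot_comm; apply: dot_ext => i //.
  rewrite /yt /d /vsub /vadd /vscale; ring.
rewrite hnorm => habs.
have hc := hcf w y t hw hy (conj (Rlt_le _ _ ht0) ht1).
rewrite -/yt in hc.
have h1 := abs_bounds habs.
have : t * D <= D / (2 * (N + 1)) * (t * N).
  have e1 : t * D = t * dot (g y) d - (t * f w - t * f y) by rewrite /D; ring.
  have e2 : (1 - t) * f y = f y - t * f y by ring.
  move: h1 => [h1 h2]; lra.
have -> : D / (2 * (N + 1)) * (t * N) = t * D * (N / (2 * (N + 1))) by field; lra.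
have : N / (2 * (N + 1)) < 1.
  apply: (Rmult_lt_reg_r (2 * (N + 1))); first lra.
  rewrite /Rdiv Rmult_assoc Rinv_l; lra.
have : 0 < t * D by nra.
nra.
Qed.

Lemma abs_le_sqrt (x c : R) : x ^ 2 <= c -> Rabs x <= sqrt c.
Proof. move=> h; rewrite -sqrt_Rsqr_abs Rsqr_pow2; exact: sqrt_le_1_alt. Qed.

Lemma sq_le_of_abs (x s : R) : Rabs x <= s -> x ^ 2 <= s ^ 2.
Proof. move=> h; rewrite -pow2_abs; have := Rabs_pos x; nra. Qed.

Lemma abs_lt_of_sq (x c : R) : 0 < c -> x ^ 2 < c ^ 2 -> Rabs x < c.
Proof.
move=> hc h; rewrite -pow2_abs in h; have := Rabs_pos x.
move=> h0; apply: Rnot_le_lt => h1; nra.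
Qed.

Definition eps_ (k : nat) : R := / INR k.+1.

Lemma eps_pos k : 0 < eps_ k.
Proof. apply: Rinv_0_lt_compat; apply: lt_0_INR; apply/ssrnat.ltP. done. Qed.

Lemma eps_le_inv (N k : nat) : (0 < N)%coq_nat -> (N <= k)%coq_nat -> eps_ k <= / INR N.
Proof.
move=> h0 h; apply: Rinv_le_contravar; first by apply: lt_0_INR.
apply: le_INR; lia.
Qed.

Lemma eps_anti k l : (k <= l)%coq_nat -> eps_ l <= eps_ k.
Proof.
move=> h; apply: Rinv_le_contravar; first by apply: lt_0_INR; lia.
apply: le_INR; lia.
Qed.

Lemma eps_le1 k : eps_ k <= 1.
Proof.
rewrite -Rinv_1; apply: Rinv_le_contravar; first lra.
rewrite S_INR; have := pos_INR k; lra.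
Qed.

Lemma small_eps (r : R) : 0 < r -> exists N, forall k, (N <= k)%coq_nat -> eps_ k < r.
Proof.
move=> hr; have [N [h1 h2]] := archimed_cor1 r hr.
exists N => k hk; have := @eps_le_inv N k h2 hk; lra.
Qed.

Lemma proj_exists {n} (S : vec n -> Prop) y :
  rn_nonempty S -> rn_closed S -> rn_convex S -> exists p, is_proj S y p.
Proof.
move=> [q0 hq0] hcl hcv.
pose dd q := dot (vsub y q) (vsub y q).
pose E r := exists q, S q /\ r = - dd q.
have hub0 : is_upper_bound E 0.
  move=> r [q [_ ->]]; have := dot_ge0 (vsub y q); rewrite /dd; lra.
have hb : bound E by exists 0.
have [m [hub hlub]] := completeness E hb (ex_intro _ (- dd q0) (ex_intro _ q0 (conj hq0 erefl))).
set d2 := - m.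
have hlow : forall q, S q -> d2 <= dd q.
  move=> q hq; have := hub (- dd q) (ex_intro _ q (conj hq erefl)); rewrite /d2; lra.
have happ : forall k, exists q, S q /\ dd q <= d2 + eps_ k.
  move=> k; apply: NNPP => hn.
  have : m <= m - eps_ k.
    apply: hlub => r [q [hq ->]].
    have : ~ (dd q <= d2 + eps_ k) by move=> h; apply: hn; exists q.
    rewrite /d2; lra.
  have := eps_pos k; lra.
pose qs k := proj1_sig (constructive_indefinite_description _ (happ k)).
have hqS : forall k, S (qs k) by move=> k; rewrite /qs; case: constructive_indefinite_description => q [].
have hqd : forall k, dd (qs k) <= d2 + eps_ k
  by move=> k; rewrite /qs; case: constructive_indefinite_description => q [].
have hpar : forall k l, dot (vsub (qs k) (qs l)) (vsub (qs k) (qs l)) <= 2 * eps_ k + 2 * eps_ l.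
  move=> k l.
  set mid := vadd (vscale (1/2) (qs k)) (vscale (1 - 1/2) (qs l)).
  have hmid : S mid by apply: hcv => //; lra.
  have hm := hlow _ hmid.
  have hk := hqd k; have hl := hqd l.
  have id : dot (vsub (qs k) (qs l)) (vsub (qs k) (qs l)) + 4 * dd mid =
            2 * dd (qs k) + 2 * dd (qs l).
    rewrite /dd /dot -!sumZ -!sumD; apply: eq_bigr => i _.
    rewrite /mid /vsub /vadd /vscale; field.
  lra.
have hcoord : forall i k l, (qs k i - qs l i) ^ 2 <= 2 * eps_ k + 2 * eps_ l.
  move=> i k l; apply: Rle_trans (hpar k l).
  exact: (coord_sq (vsub (qs k) (qs l)) i).
have hcau : forall i, Cauchy_crit (fun k => qs k i).
  move=> i eps heps.
  have [N hN] := small_eps (eps ^ 2 / 4) ltac:(nra).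
  exists N => k l hk hl; rewrite /Rdist.
  apply: abs_lt_of_sq => //.
  have := hcoord i k l; have := hN k hk; have := hN l hl; lra.
pose p i := proj1_sig (R_complete _ (hcau i)).
have hp : forall i, Un_cv (fun k => qs k i) (p i)
  by move=> i; rewrite /p; case: R_complete.
have hbnd : forall k i, (qs k i - p i) ^ 2 <= 4 * eps_ k.
  move=> k i.
  have -> : 4 * eps_ k = sqrt (4 * eps_ k) ^ 2.
    rewrite pow2_sqrt //; have := eps_pos k; lra.
  apply: sq_le_of_abs; apply: Rle_plus_epsilon => eta heta.
  have [N hN] := hp i eta heta.
  set l := Nat.max N k.
  have hl1 := hN l (Nat.le_max_l N k).
  have hkl : (k <= l)%coq_nat by apply: Nat.le_max_r.
  rewrite /Rdist in hl1.
  have h2 : Rabs (qs k i - qs l i) <= sqrt (4 * eps_ k).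
    apply: abs_le_sqrt; have := hcoord i k l; have := @eps_anti k l hkl; lra.
  have -> : qs k i - p i = (qs k i - qs l i) + (qs l i - p i) by ring.
  apply: Rle_trans (Rabs_triang _ _) _; lra.
have hdist : forall k, dot (vsub (qs k) p) (vsub (qs k) p) <= INR n * (4 * eps_ k).
  move=> k; rewrite -sum_const; apply: sum_le => i.
  rewrite /vsub; have := hbnd k i; nra.
have hconv : rn_converges qs p.
  move=> eps heps.
  have hn0 := pos_INR n.
  have [N hN] := small_eps (eps ^ 2 / (4 * (INR n + 1))) ltac:(apply: Rdiv_lt_0_compat; nra).
  exists N => k /ssrnat.leP hk.
  apply: norm_lt_of => //.
  have h1 := hN k hk; have h2 := hdist k; have h3 := eps_pos k.
  have : (4 * (INR n + 1)) * eps_ k < eps ^ 2.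
    have := Rmult_lt_compat_l (4 * (INR n + 1)) _ _ ltac:(lra) h1.
    have -> : 4 * (INR n + 1) * (eps ^ 2 / (4 * (INR n + 1))) = eps ^ 2 by field; lra.
    done.
  nra.
have hSp : S p := hcl qs p hqS hconv.
exists p; split => // q hq.
have key : dd p <= d2.
  apply: Rle_plus_epsilon => eta heta.
  have hd0 : 0 <= d2 + 1.
    have := hlub 0 hub0; rewrite /d2; lra.
  set B := sqrt (d2 + 1).
  have hB : 0 <= B by apply: sqrt_pos.
  set rho := Rmin 1 (eta / (2 + 2 * B)).
  have hrho : 0 < rho.
    rewrite /rho; apply: Rmin_glb_lt; first lra. apply: Rdiv_lt_0_compat; lra.
  have hrho1 : rho <= 1 by apply: Rmin_l.
  have hrho2 : rho * (2 + 2 * B) <= eta.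
    have := Rmin_r 1 (eta / (2 + 2 * B)); rewrite -/rho => h.
    have := Rmult_le_compat_r (2 + 2 * B) _ _ ltac:(lra) h.
    have -> : eta / (2 + 2 * B) * (2 + 2 * B) = eta by field; lra.
    done.
  have [N1 hN1] := hconv rho hrho.
  have [N2 hN2] := small_eps rho hrho.
  set k := maxn N1 N2.
  have hb1 := hN1 k (leq_maxl N1 N2).
  have hek := hN2 k (ssrnat.leP (leq_maxr N1 N2)).
  set a := norm (vsub y (qs k)); set b := norm (vsub (qs k) p).
  have ha0 : 0 <= a by apply: norm_ge0.
  have hb0 : 0 <= b by apply: norm_ge0.
  have hbr : b < rho by exact: hb1.
  have ha2 : a ^ 2 <= d2 + eps_ k by rewrite /a norm_sq; apply: hqd.
  have haB : a <= B.
    rewrite /a /B /norm; apply: sqrt_le_1_alt; have := hqd k; have := eps_le1 k; rewrite /dd; lra.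
  have htri : norm (vsub y p) <= a + b.
    apply: norm_triangle => i; rewrite /vsub; ring.
  have : dd p <= (a + b) ^ 2.
    rewrite /dd -norm_sq; have := norm_ge0 (vsub y p); nra.
  have : a * b <= B * rho by apply: Rmult_le_compat; lra.
  have : b ^ 2 <= rho by nra.
  move=> h1 h2 h3.
  have : (a + b) ^ 2 = a ^ 2 + 2 * (a * b) + b ^ 2 by ring.
  nra.
have := hlow q hq.
move=> h; rewrite /norm; apply: sqrt_le_1_alt; rewrite /dd in key h; lra.
Qed.

Lemma dot_neg_r {n} (a x y : vec n) : dot a (vsub x y) = - dot a (vsub y x).
Proof. rewrite !(dot_comm a) !dot_subl; ring. Qed.

Lemma cs_low {n} (x y : vec n) : - (norm x * norm y) <= dot x y.
Proof.
have h := cs x (vscale (-1) y).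
have e1 : dot x (vscale (-1) y) = - dot x y by rewrite dot_comm dot_scalel dot_comm; ring.
have e2 : norm (vscale (-1) y) = norm y.
  rewrite /norm dot_scalel dot_comm dot_scalel; congr sqrt; ring.
rewrite e1 e2 in h; lra.
Qed.

Lemma opt_closed {n} (X : vec n -> Prop) f g fstar :
  rn_closed X -> C1_on X f g -> is_min_value X f fstar -> rn_closed (opt_set X f fstar).
Proof.
move=> hcl [U [_ [hXU [hg _]]]] [hmin _] u p hu hconv.
have hXp : X p := hcl u p (fun k => proj1 (hu k)) hconv.
split => //.
apply: Rle_antisym; last by apply: hmin.
apply: Rle_plus_epsilon => eta heta.
have [del [hdel H]] := hg p (hXU p hXp) 1 Rlt_0_1.
set G := norm (g p).
have hG : 0 <= G by apply: norm_ge0.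
set r := Rmin del (eta / (G + 1)).
have hr : 0 < r by rewrite /r; apply: Rmin_glb_lt => //; apply: Rdiv_lt_0_compat; lra.
have [N hN] := hconv r hr.
have hv := hN N (leqnn N).
have hv1 : norm (vsub (u N) p) < del by have := Rmin_l del (eta / (G + 1)); rewrite -/r; lra.
have hv2 : norm (vsub (u N) p) * (G + 1) <= eta.
  have := Rmin_r del (eta / (G + 1)); rewrite -/r => h.
  have h0 := norm_ge0 (vsub (u N) p).
  have := Rmult_le_compat_r (G + 1) _ _ ltac:(lra) (Rlt_le _ _ (Rlt_le_trans _ _ _ hv h)).
  have -> : eta / (G + 1) * (G + 1) = eta by field; lra.
  done.
have [h1 h2] := abs_bounds (H _ hv1).
have [_ hfu] := hu N.
have hc := cs_low (g p) (vsub (u N) p). rewrite -/G in hc.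

have e : norm (vsub (u N) p) * (G + 1) = G * norm (vsub (u N) p) + 1 * norm (vsub (u N) p) by ring.
lra.
Qed.

Lemma opt_convex {n} (X : vec n -> Prop) f fstar :
  rn_convex X -> rn_convex_on X f -> is_min_value X f fstar -> rn_convex (opt_set X f fstar).
Proof.
move=> hcv hcf [hmin _] a b t [ha hfa] [hb hfb] ht.
have hX := hcv a b t ha hb ht.
split => //.
apply: Rle_antisym; last by apply: hmin.
have := hcf a b t ha hb ht; rewrite hfa hfb; lra.
Qed.

Lemma final_alg (D Dk r s kappa L M : R) :
  0 < kappa -> 0 < L -> 0 < M -> 0 <= r -> 0 <= s -> 0 <= D ->
  kappa / 2 * s ^ 2 <= D -> D <= M * r * s -> L / 2 * r ^ 2 <= Dk - D ->
  D <= / (1 + L * kappa / (4 * M ^ 2)) * Dk.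
Proof.
move=> hk hL hM hr hs hD H1 H2 H3.
have hM2 : 0 < 4 * M ^ 2 by nra.
have hq : 0 < 1 + L * kappa / (4 * M ^ 2).
  have : 0 < L * kappa / (4 * M ^ 2) by apply: Rdiv_lt_0_compat => //; nra.
  lra.
suff : D * (1 + L * kappa / (4 * M ^ 2)) <= Dk.
  move=> h; apply: (Rmult_le_reg_r (1 + L * kappa / (4 * M ^ 2))) => //.
  rewrite Rmult_assoc (Rmult_comm Dk) -Rmult_assoc Rinv_l; lra.
suff : D * (4 * M ^ 2 + L * kappa) <= 4 * M ^ 2 * Dk.
  move=> h.
  have -> : D * (1 + L * kappa / (4 * M ^ 2)) = D * (4 * M ^ 2 + L * kappa) / (4 * M ^ 2)
    by field; lra.
  apply: (Rmult_le_reg_r (4 * M ^ 2)) => //.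
  have -> : D * (4 * M ^ 2 + L * kappa) / (4 * M ^ 2) * (4 * M ^ 2) =
            D * (4 * M ^ 2 + L * kappa) by field; lra.
  lra.
case: (Rle_lt_or_eq_dec 0 D hD) => hD0; last first.
  have : 0 <= L / 2 * r ^ 2 by apply: Rmult_le_pos; nra.
  move=> h0; have hDk : 0 <= Dk by lra.
  rewrite -hD0 Rmult_0_l; apply: Rmult_le_pos; lra.
have a : D * D <= (M * r * s) * (M * r * s) by apply: Rmult_le_compat.
have b : kappa * s ^ 2 <= 2 * D by lra.
have c : kappa * (D * D) <= (M * r) ^ 2 * (2 * D).
  have : kappa * (D * D) <= kappa * ((M * r * s) * (M * r * s)) by apply: Rmult_le_compat_l; lra.
  have : (M * r) ^ 2 * (kappa * s ^ 2) <= (M * r) ^ 2 * (2 * D) by apply: Rmult_le_compat_l; nra.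
  have -> : kappa * (M * r * s * (M * r * s)) = (M * r) ^ 2 * (kappa * s ^ 2) by ring.
  lra.
have d : kappa * D <= 2 * M ^ 2 * r ^ 2.
  apply: (Rmult_le_reg_r D) => //.
  have -> : kappa * D * D = kappa * (D * D) by ring.
  have -> : 2 * M ^ 2 * r ^ 2 * D = (M * r) ^ 2 * (2 * D) by ring.
  done.
have e : L * (kappa * D) <= L * (2 * M ^ 2 * r ^ 2) by apply: Rmult_le_compat_l; lra.
have f : M ^ 2 * (L * r ^ 2) <= M ^ 2 * (2 * (Dk - D)) by apply: Rmult_le_compat_l; nra.
have e2 : L * (2 * M ^ 2 * r ^ 2) = 2 * (M ^ 2 * (L * r ^ 2)) by ring.
have e3 : L * (kappa * D) = D * (L * kappa) by ring.
lra.
Qed.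

Theorem theorem15 (n : nat) (X : vec n -> Prop) (f : vec n -> R) (gradf : vec n -> vec n)
  (Lf fstar kappa beta L Lbar : R)
  (x e : nat -> vec n) (alpha : nat -> R) :
  rn_nonempty X -> rn_closed X -> rn_convex X ->
  rn_convex_on X f -> C1_on X f gradf ->
  0 < Lf -> rn_lipschitz_on X gradf Lf ->
  is_min_value X f fstar ->
  0 < kappa ->
  (forall y p, X y -> is_proj (opt_set X f fstar) y p ->
      kappa / 2 * (norm (vsub y p)) ^ 2 <= f y - fstar) ->
  0 <= beta -> 0 < L -> 0 < Lbar ->
  (forall k, X (x k)) ->
  (forall k, is_proj X (vadd (vsub (x k) (vscale (alpha k) (gradf (x k)))) (e k)) (x (S k))) ->
  (forall k, / Lbar <= alpha k) ->
  (forall k, norm (e k) <= beta * norm (vsub (x (S k)) (x k))) ->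
  (forall k, f (x (S k)) <= f (x k) - L / 2 * (norm (vsub (x (S k)) (x k))) ^ 2) ->
  forall k : nat,
    f (x k) - fstar <=
      (/ (1 + L * kappa / (4 * (Lf + Lbar + beta * Lbar) ^ 2))) ^ k * (f (x 0%nat) - fstar).
Proof.
move=> hne hcl hcv hcf hC1 hLf hlip hmin hkap hQG hbeta hL hLbar hX hproj halpha he hdesc.
have [U [_ [hXU [hg _]]]] := hC1.
have hoc := @opt_closed n X f gradf fstar hcl hC1 hmin.
have hov := @opt_convex n X f fstar hcv hcf hmin.
have hon : rn_nonempty (opt_set X f fstar).
  case: hmin => _ [x0 [h1 h2]]; by exists x0.
have hM : 0 < Lf + Lbar + beta * Lbar by have := Rmult_le_pos beta Lbar hbeta (Rlt_le _ _ hLbar); lra.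
have step : forall j, f (x j.+1) - fstar <=
    / (1 + L * kappa / (4 * (Lf + Lbar + beta * Lbar) ^ 2)) * (f (x j) - fstar).
  move=> j.
  have [p hp] := @proj_exists n _ (x j.+1) hon hoc hov.
  have [[hXp hfp] _] := hp.
  have hQ := hQG _ p (hX j.+1) hp.
  have hD0 : 0 <= f (x j.+1) - fstar by have := proj1 hmin _ (hX j.+1); lra.
  have hfo := @first_order n U X f gradf _ _ hcf hg (hXU _ (hX j.+1)) (hX j.+1) hXp.
  have hvi := @proj_vi n X _ _ _ hcv (hproj j) hXp.
  set y := x j.+1 in hQ hD0 hfo hvi *.
  set xk := x j in hvi *.
  set z := vadd (vsub xk (vscale (alpha j) (gradf xk))) (e j) in hvi.
  set a := alpha j in z hvi *.
  have hid : a * dot (gradf y) (vsub y p) =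
     a * dot (vsub (gradf y) (gradf xk)) (vsub y p) + dot (vsub z y) (vsub p y)
       + dot (vadd (vsub xk y) (e j)) (vsub y p).
    rewrite /dot -!sumZ -!sumD; apply: eq_bigr => i _; rewrite /z /vsub /vadd /vscale; ring.
  set s := norm (vsub y p) in hQ *.
  set r := norm (vsub y xk).
  have hs : 0 <= s by apply: norm_ge0.
  have hr : 0 <= r by apply: norm_ge0.
  have T1 : dot (vsub (gradf y) (gradf xk)) (vsub y p) <= Lf * r * s.
    apply: Rle_trans (cs _ _) _; rewrite -/s.
    apply: Rmult_le_compat_r => //; apply: hlip; apply: hX.
  have T3 : dot (vadd (vsub xk y) (e j)) (vsub y p) <= (r + beta * r) * s.
    apply: Rle_trans (cs _ _) _; rewrite -/s.
    apply: Rmult_le_compat_r => //.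
    apply: Rle_trans (@norm_triangle _ (vadd (vsub xk y) (e j)) (vsub xk y) (e j) _) _.
      by move=> i; rewrite /vadd.
    rewrite norm_subC -/r; have := he j; rewrite -/y -/xk -/r; lra.
  have hDg : f y - fstar <= dot (gradf y) (vsub y p).
    rewrite dot_neg_r; rewrite hfp in hfo; lra.
  have ha : 0 < a by have := halpha j; have := Rinv_0_lt_compat _ hLbar; rewrite -/a; lra.
  have haL : 1 <= a * Lbar.
    have := Rmult_le_compat_r Lbar _ _ (Rlt_le _ _ hLbar) (halpha j); rewrite -/a Rinv_l; lra.
  have hmain : f y - fstar <= (Lf + Lbar + beta * Lbar) * r * s.
    apply: (Rmult_le_reg_l a) => //.
    have h1 : a * (f y - fstar) <= a * dot (gradf y) (vsub y p) by apply: Rmult_le_compat_l; lra.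
    have h2 : a * dot (vsub (gradf y) (gradf xk)) (vsub y p) <= a * (Lf * r * s)
      by apply: Rmult_le_compat_l; lra.
    have h3 : 0 <= (1 + beta) * (r * s) by apply: Rmult_le_pos; nra.
    have h4 : (1 + beta) * (r * s) <= (a * Lbar) * ((1 + beta) * (r * s)).
      have := Rmult_le_compat_r _ _ _ h3 haL; lra.
    have e1 : a * ((Lf + Lbar + beta * Lbar) * r * s) =
       a * (Lf * r * s) + (a * Lbar) * ((1 + beta) * (r * s)) by ring.
    have e2 : (r + beta * r) * s = (1 + beta) * (r * s) by ring.
    lra.
  have hdk := hdesc j; rewrite -/y -/xk -/r in hdk.
  apply: (@final_alg _ _ r s kappa L _ hkap hL hM hr hs hD0 hQ hmain); lra.
elim => [|k IH]; first (simpl; lra).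
apply: Rle_trans (step k) _.
have hq : 0 <= / (1 + L * kappa / (4 * (Lf + Lbar + beta * Lbar) ^ 2)).
  apply: Rlt_le; apply: Rinv_0_lt_compat.
  have : 0 < L * kappa / (4 * (Lf + Lbar + beta * Lbar) ^ 2)
    by apply: Rdiv_lt_0_compat; nra.
  lra.
rewrite /= Rmult_assoc; apply: Rmult_le_compat_l => //.
Qed.
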